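(* Let $(W,S)$ be a Coxeter system with $S$ finite, and let $F:W\to\operatorname{Ad}(Q_W)$ be the map with $F(w)=e_{s_1}\cdots e_{s_k}$ whenever $w=s_1\cdots s_k$ ($s_i\in S$) is a reduced expression. Define $c:W\times W\to C_W$ by $c(w_1,w_2)=F(w_1)F(w_2)F(w_1w_2)^{-1}$. Then $c$ is a normalized $2$-cocycle (with values in the trivial $W$-module $C_W$), and its cohomology class $[c]\in H^2(W,C_W)$ equals the class $u_\phi$ of the central extension $1\to C_W\to\operatorname{Ad}(Q_W)\xrightarrow{\phi}W\to1$.
   Context: A Coxeter system $(W,S)$: $S$ finite, $m:S\times S\to\mathbb{N}\cup\{\infty\}$ with $m(s,s)=1$, $2\le m(s,t)=m(t,s)\le\infty$ for $s\ne t$, $W=\langle s\in S\mid (st)^{m(s,t)}=1\ (m(s,t)<\infty)\rangle$. The Coxeter quandle $Q_W=\bigcup_{w\in W}w^{-1}Sw$ has operation $x\ast y=yxy$; $\operatorname{Ad}(Q_W)=\langle e_x\ (x\in Q_W)\mid e_y^{-1}e_xe_y=e_{x\ast y}\rangle$; $\phi:\operatorname{Ad}(Q_W)\to W$ is $e_x\mapsto x$, and $C_W=\ker\phi$, which is a central subgroup. The map $F$ is well defined, i.e. the product $e_{s_1}\cdots e_{s_k}$ does not depend on the choice of reduced expression of $w$ (this follows from Matsumoto's theorem, since $(e_se_t)_{m(s,t)}=(e_te_s)_{m(s,t)}$ holds, where $(gh)_m$ denotes the alternating product $ghg\cdots$ with $m$ factors). The class $u_\phi$ is the element of $H^2(W,C_W)$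 classifying the central extension in the standard way. *)

(* Defs.v *)
(* MathComp (boot) world; groups given by presentations are modelled as
   setoids of words (free-group words modulo the congruence generated by
   free reduction and the relators). *)
From Stdlib Require Import ClassicalEpsilon.
From mathcomp Require Import all_boot.

Unset Strict Implicit.
Unset Printing Implicit Defensive.

(* A letter (x, false) stands for x, (x, true) for x^{-1}. *)
Definition word (X : Type) := seq (X * bool).

Definition letter_inv {X : Type} (a : X * bool) : X * bool := (a.1, ~~ a.2).

Definition winv {X : Type} (u : word X) : word X := rev (map letter_inv u).

Definition pos {X : Type} (l : seq X) : word X := map (fun x => (x, false)) l.

(* Equality in the group < X | r = 1 (R r) >: multiplication is
   concatenation, identity [::], inverse winv. *)
Inductive pres_eq {X : Type} (R : word X -> Prop) : word X -> word X -> Prop :=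
| pe_refl u : pres_eq R u u
| pe_sym u v : pres_eq R u v -> pres_eq R v u
| pe_trans u v w : pres_eq R u v -> pres_eq R v w -> pres_eq R u w
| pe_free u v a : pres_eq R (u ++ a :: letter_inv a :: v) (u ++ v)
| pe_rel u v r : R r -> pres_eq R (u ++ r ++ v) (u ++ v).

(* Coxeter matrix m : S -> S -> nat, where the value 0 encodes m(s,t) = oo. *)
Definition coxeter_matrix {S : finType} (m : S -> S -> nat) : Prop :=
  (forall s, m s s = 1) /\ (forall s t, m s t = m t s) /\
  (forall s t, s != t -> m s t != 1).

Fixpoint alt {S : Type} (s t : S) (n : nat) : seq S :=
  match n with 0 => [::] | n'.+1 => s :: alt t s n' end.

Definition cox_rel {S : finType} (m : S -> S -> nat) (r : word S) : Prop :=
  exists s t, 0 < m s t /\ r = pos (alt s t (2 * m s t)).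

Definition W_eq {S : finType} (m : S -> S -> nat) := pres_eq (cox_rel m).

Definition inQ {S : finType} (m : S -> S -> nat) (w : word S) : Prop :=
  exists (v : word S) (s : S), W_eq m w (winv v ++ (s, false) :: v).

Definition QW {S : finType} (m : S -> S -> nat) := {w : word S | inQ m w}.

(* relators of Ad(Q_W): e_x = e_x' when x = x' in W, and
   e_y^{-1} e_x e_y = e_{x * y} with x * y = y x y *)
Definition ad_rel {S : finType} (m : S -> S -> nat) (r : word (QW m)) : Prop :=
  (exists x x' : QW m, W_eq m (proj1_sig x) (proj1_sig x') /\
       r = [:: (x, false); (x', true)])
  \/ (exists x y z : QW m,
       W_eq m (proj1_sig z) (proj1_sig y ++ proj1_sig x ++ proj1_sig y) /\
       r = [:: (y, true); (x, false); (y, false); (z, true)]).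

Definition Ad_eq {S : finType} (m : S -> S -> nat) := pres_eq (ad_rel m).

Definition phi {S : finType} (m : S -> S -> nat) (a : word (QW m)) : word S :=
  flatten (map (fun l : QW m * bool =>
     if l.2 then winv (proj1_sig l.1) else proj1_sig l.1) a).

Definition inC {S : finType} (m : S -> S -> nat) (a : word (QW m)) : Prop :=
  W_eq m (phi m a) [::].

Definition gen_of {S : finType} (m : S -> S -> nat) (s : S) : QW m :=
  exist (inQ m) (pos [:: s])
    (ex_intro _ [::] (ex_intro _ s (pe_refl (cox_rel m) [:: (s, false)]))).

Definition reduced_expr {S : finType} (m : S -> S -> nat) (w : word S)
  (l : seq S) : Prop :=
  W_eq m (pos l) w /\ forall l', W_eq m (pos l') w -> size l <= size l'.

Definition red_of {S : finType} (m : S -> S -> nat) (w : word S) : seq S :=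
  epsilon (inhabits [::]) (reduced_expr m w).

Definition Fmap {S : finType} (m : S -> S -> nat) (w : word S) : word (QW m) :=
  pos (map (gen_of m) (red_of m w)).

Definition ccoc {S : finType} (m : S -> S -> nat) (w1 w2 : word S)
  : word (QW m) :=
  Fmap m w1 ++ Fmap m w2 ++ winv (Fmap m (w1 ++ w2)).

Definition is_section {S : finType} (m : S -> S -> nat)
  (sigma : word S -> word (QW m)) : Prop :=
  (forall w w', W_eq m w w' -> Ad_eq m (sigma w) (sigma w')) /\
  (forall w, W_eq m (phi m (sigma w)) w).

(* the 2-cocycle of the extension attached to a section: s(w1)s(w2)s(w1w2)^{-1};
   its class is u_phi *)
Definition ext_cocycle {S : finType} (m : S -> S -> nat)
  (sigma : word S -> word (QW m)) (w1 w2 : word S) : word (QW m) :=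
  sigma w1 ++ sigma w2 ++ winv (sigma (w1 ++ w2)).

(* c is a well-defined map W x W -> C_W which is a normalized 2-cocycle for
   the trivial action (written multiplicatively; C_W is abelian). *)
Definition normalized_2cocycle {S : finType} (m : S -> S -> nat)
  (c : word S -> word S -> word (QW m)) : Prop :=
  (forall w1 w1' w2 w2', W_eq m w1 w1' -> W_eq m w2 w2' ->
      Ad_eq m (c w1 w2) (c w1' w2')) /\
  (forall w1 w2, inC m (c w1 w2)) /\
  (forall w, Ad_eq m (c [::] w) [::] /\ Ad_eq m (c w [::]) [::]) /\
  (forall g h k, Ad_eq m (c h k ++ c g (h ++ k)) (c (g ++ h) k ++ c g h)).

(* c and c' differ by the coboundary of some b : W -> C_W
   (trivial action: (db)(w1,w2) = b(w1) b(w2) b(w1 w2)^{-1}) *)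
Definition cohomologous {S : finType} (m : S -> S -> nat)
  (c c' : word S -> word S -> word (QW m)) : Prop :=
  exists b : word S -> word (QW m),
    (forall w w', W_eq m w w' -> Ad_eq m (b w) (b w')) /\
    (forall w, inC m (b w)) /\
    (forall w1 w2, Ad_eq m (c w1 w2)
                     (c' w1 w2 ++ b w1 ++ b w2 ++ winv (b (w1 ++ w2)))).

(* Main.v *)
Require Import Defs.
From mathcomp Require Import all_boot.
From Stdlib Require Import Setoid Morphisms ClassicalEpsilon Classical Lia.

Lemma pe_cat X (R : word X -> Prop) u v p q :
  pres_eq R u v -> pres_eq R (p ++ u ++ q) (p ++ v ++ q).
Proof.
elim=> {u v}.
- by move=> u; apply: pe_refl.
- by move=> u v _ H; apply: pe_sym.
- by move=> u v w _ H1 _ H2; apply: pe_trans H2.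
- move=> u v a; have := pe_free R (p ++ u) (v ++ q) a.
  by rewrite -!catA.
- move=> u v r Hr; have := pe_rel R (p ++ u) (v ++ q) r Hr.
  by rewrite -!catA.
Qed.

#[global] Instance pe_equiv X (R : word X -> Prop) : Equivalence (pres_eq R).
Proof.
split; [exact: pe_refl | exact: pe_sym | exact: pe_trans].
Qed.

#[global] Instance cat_proper X (R : word X -> Prop) :
  Proper (pres_eq R ==> pres_eq R ==> pres_eq R) (@cat (X * bool)).
Proof.
move=> u u' Hu v v' Hv.
apply: pe_trans (_ : pres_eq R (u' ++ v) _).
  by have := @pe_cat _ R u u' [::] v Hu.
by have := @pe_cat _ R v v' u' [::] Hv; rewrite !cats0.
Qed.

#[global] Hint Resolve pe_refl : core.

Section Gen.
Variables (X : Type) (R : word X -> Prop).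
Local Notation "u ~ v" := (pres_eq R u v) (at level 70).

Lemma letter_invK (a : X * bool) : letter_inv (letter_inv a) = a.
Proof. by case: a => x [] . Qed.

Lemma winv_cat (u v : word X) : winv (u ++ v) = winv v ++ winv u.
Proof. by rewrite /winv map_cat rev_cat. Qed.

Lemma winv_cons a (u : word X) : winv (a :: u) = winv u ++ [:: letter_inv a].
Proof. by rewrite /winv /= rev_cons -cats1. Qed.

Lemma winvK (u : word X) : winv (winv u) = u.
Proof.
by rewrite /winv map_rev revK -map_comp (eq_map letter_invK) map_id.
Qed.

Lemma winv_nil : winv (@nil (X * bool)) = [::].
Proof. by []. Qed.

Lemma cat_winv (u : word X) : u ++ winv u ~ [::].
Proof.
elim: u => [|a u IH] /=; first by reflexivity.
rewrite winv_cons.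
apply: pe_trans (_ : pres_eq R ([:: a] ++ [::] ++ [:: letter_inv a]) _).
  by have := @pe_cat _ R _ _ [:: a] [:: letter_inv a] IH; rewrite /= -catA.
exact: (pe_free R [::] [::] a).
Qed.

Lemma winv_cat' (u : word X) : winv u ++ u ~ [::].
Proof. by have := cat_winv (winv u); rewrite winvK. Qed.

Lemma canc1 (u q : word X) : u ++ winv u ++ q ~ q.
Proof. by rewrite catA cat_winv; reflexivity. Qed.

Lemma canc2 (u q : word X) : winv u ++ u ++ q ~ q.
Proof. by rewrite catA winv_cat'; reflexivity. Qed.

#[global] Instance winv_proper : Proper (pres_eq R ==> pres_eq R) (@winv X).
Proof.
move=> u v H.
rewrite -[X in X ~ _]cats0 -(cat_winv v) -{1}H catA winv_cat' //.
Qed.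

Lemma cancl (p u v : word X) : p ++ u ~ p ++ v -> u ~ v.
Proof. by move=> H; rewrite -(canc2 p u) H canc2. Qed.

Lemma cancr (p u v : word X) : u ++ p ~ v ++ p -> u ~ v.
Proof.
move=> H; rewrite -[u]cats0 -[v]cats0 -(cat_winv p) !catA H //.
Qed.

Lemma conj_iff (p r x : word X) : p ++ r ++ winv p ~ x <-> r ~ winv p ++ x ++ p.
Proof.
split=> H.
  by rewrite -H !catA winv_cat' /= -catA winv_cat' cats0.
by rewrite H !catA cat_winv /= -catA cat_winv cats0.
Qed.

End Gen.

#[global] Instance cons_proper X (R : word X -> Prop) a :
  Proper (pres_eq R ==> pres_eq R) (cons a).
Proof.
move=> u v H; have := @pe_cat _ R u v [:: a] [::] H; by rewrite !cats0.
Qed.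

Section Cox.
Variables (S : finType) (m : S -> S -> nat).
Hypothesis Hm : coxeter_matrix m.
Local Notation "u ~ v" := (pres_eq (cox_rel m) u v) (at level 70).

Lemma ss_W s : [:: (s,false); (s,false)] ~ [::].
Proof.
have Hs : m s s = 1 by case: Hm.
have := pe_rel (cox_rel m) [::] [::] (pos (alt s s (2 * m s s))).
rewrite Hs /=; apply; exists s, s; by rewrite Hs.
Qed.

Lemma letter_W s b : [:: (s,b)] ~ [:: (s,false)].
Proof.
case: b => //.
apply: pe_trans (_ : _ ~ [:: (s,true); (s,false); (s,false)]) _.
  by have := @pe_cat _ _ _ _ [:: (s,true)] [::] (ss_W s); rewrite cats0 => H; symmetry.
exact: (pe_free _ [::] [:: (s,false)] (s,true)).
Qed.

Lemma winv_pos l : winv (pos l) ~ pos (rev l).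
Proof.
elim: l => [|x l IH] //=.
rewrite winv_cons IH /= letter_W rev_cons -cats1 /pos map_cat //.
Qed.

Lemma strip (w : word S) : pos (map fst w) ~ w.
Proof.
elim: w => [|[s b] w IH] //=.
rewrite -[(s,false) :: _]cat1s -[(s,b) :: _]cat1s IH letter_W //.
Qed.

Lemma refl_inv (x : QW m) : winv (proj1_sig x) ~ proj1_sig x.
Proof.
case: x => w [v [s H]] /=.
rewrite H !winv_cat winvK winv_cons -catA letter_W //.
Qed.

Lemma refl_sq (x : QW m) : proj1_sig x ++ proj1_sig x ~ [::].
Proof. by rewrite -{2}(refl_inv x) cat_winv. Qed.

Definition Wb (u v : word S) : bool :=
  if excluded_middle_informative (u ~ v) then true else false.

Lemma WbP u v : reflect (u ~ v) (Wb u v).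
Proof. rewrite /Wb; case: excluded_middle_informative => H; by constructor. Qed.

Lemma Wb_r u v v' : v ~ v' -> Wb u v = Wb u v'.
Proof.
move=> H; apply/idP/idP => /WbP H'; apply/WbP; by rewrite H' ?H // -H.
Qed.

Lemma Wb_l u u' v : u ~ u' -> Wb u v = Wb u' v.
Proof.
move=> H; apply/idP/idP => /WbP H'; apply/WbP; by rewrite -H' ?H // -H.
Qed.

Definition cj (p r : word S) := p ++ r ++ winv p.

Fixpoint refls (u : word S) : seq (word S) :=
  match u with
  | [::] => [::]
  | a :: u' => [:: (a.1, false)] :: map (cj [:: a]) (refls u')
  end.

Lemma refls_cat u v : refls (u ++ v) = refls u ++ map (cj u) (refls v).
Proof.
elim: u => [|a u IH] /=.
  by rewrite /cj /= (eq_map (g := id)) ?map_id // => r; rewrite cats0.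
rewrite IH map_cat -map_comp; congr (_ :: (_ ++ _)); apply: eq_map => r.
by rewrite /cj /= !winv_cons -!catA.
Qed.

Definition cnt u x := count (fun r => Wb r x) (refls u).

Lemma count_cj p L x :
  count (fun r => Wb r x) (map (cj p) L) =
  count (fun r => Wb r (winv p ++ x ++ p)) L.
Proof.
rewrite count_map; apply: eq_count => r /=.
apply/idP/idP => /WbP H; apply/WbP; by apply/conj_iff.
Qed.

Lemma cnt_insert p X q :
  X ~ [::] -> (forall x, ~~ odd (cnt X x)) ->
  forall x, odd (cnt (p ++ X ++ q) x) = odd (cnt (p ++ q) x).
Proof.
move=> HX Hev x; rewrite /cnt !refls_cat !map_cat !count_cat !count_cj.
set x' := winv p ++ x ++ p.
have -> : count (fun r => Wb r (winv X ++ x' ++ X)) (refls q) =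
          count (fun r => Wb r x') (refls q).
  apply: eq_count => r /=; apply: Wb_r.
  by rewrite HX winv_nil /= cats0.
rewrite !oddD; move: (Hev x'); rewrite /cnt; by case: (odd _).
Qed.


Lemma alt_rcons (s t : S) n :
  alt s t n.+1 = rcons (alt s t n) (if odd n then t else s).
Proof.
elim: n s t => [|n IH] s t //.
change (s :: alt t s n.+1 = rcons (s :: alt t s n) (if odd n.+1 then t else s)).
by rewrite IH /=; case: (odd n).
Qed.

Lemma alt_even (s t : S) k r : alt s t (k.*2 + r) = alt s t k.*2 ++ alt s t r.
Proof.
elim: k => [|k IH] //; rewrite doubleS !addSn.
change (s :: t :: alt s t (k.*2 + r) = s :: t :: alt s t k.*2 ++ alt s t r).
by rewrite IH.
Qed.

Lemma pos_cat (l1 l2 : seq S) : pos (l1 ++ l2) = pos l1 ++ pos l2.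
Proof. by rewrite /pos map_cat. Qed.

Lemma alt_step (s t : S) j :
  pos (alt s t (1 + j).*2.+1) = (s,false) :: pos (alt t s j.*2.+1) ++ [:: (s,false)].
Proof.
rewrite add1n doubleS.
change (pos (s :: alt t s j.*2.+2) = (s,false) :: pos (alt t s j.*2.+1) ++ [:: (s,false)]).
by rewrite alt_rcons /= odd_double /= -cats1 pos_cat.
Qed.

Lemma refls_alt k : forall (s t : S) x,
  count (fun r => Wb r x) (refls (pos (alt s t k))) =
  count (fun j => Wb (pos (alt s t j.*2.+1)) x) (iota 0 k).
Proof.
elim: k => [|k IH] s t x //.
change (Wb [:: (s,false)] x + count (fun r => Wb r x) (map (cj [:: (s,false)]) (refls (pos (alt t s k))))
  = Wb [:: (s,false)] x + count (fun j => Wb (pos (alt s t j.*2.+1)) x) (iota 1 k)).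
rewrite count_cj IH (iotaDl 1 0 k) count_map; congr (_ + _); apply: eq_count => j.
change (Wb (pos (alt t s j.*2.+1)) (winv [:: (s, false)] ++ x ++ [:: (s, false)]) =
  Wb (pos (alt s t (1 + j).*2.+1)) x).
rewrite alt_step.
set P := pos (alt t s j.*2.+1).
have E : [:: (s,false)] ++ P ++ winv [:: (s,false)] ~ (s, false) :: P ++ [:: (s, false)].
  change ([:: (s,false)] ++ P ++ [:: (s,true)] ~ [:: (s,false)] ++ P ++ [:: (s,false)]).
  apply: cat_proper => //; apply: cat_proper => //; exact: letter_W.
apply/idP/idP => /WbP H; apply/WbP.
- by rewrite -E; apply/conj_iff.
- by apply: (proj1 (conj_iff _ _ _ _ _)); rewrite E.
Qed.

Lemma rel_W (s t : S) : 0 < m s t -> pos (alt s t (m s t).*2) ~ [::].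
Proof.
move=> H; have := pe_rel (cox_rel m) [::] [::] (pos (alt s t (m s t).*2)).
rewrite /= cats0; apply; exists s, t; by rewrite mul2n.
Qed.

Lemma even_rel (s t : S) : 0 < m s t ->
  forall x, ~~ odd (cnt (pos (alt s t (2 * m s t))) x).
Proof.
move=> Hst x; rewrite /cnt mul2n refls_alt -addnn iotaD add0n.
rewrite -[in iota (m s t)](addn0 (m s t)) iotaDl count_cat count_map.
have -> : count (preim (addn (m s t)) (fun j => Wb (pos (alt s t j.*2.+1)) x)) (iota 0 (m s t))
   = count (fun j => Wb (pos (alt s t j.*2.+1)) x) (iota 0 (m s t)).
  apply: eq_count => j.
  change (Wb (pos (alt s t (m s t + j).*2.+1)) x = Wb (pos (alt s t j.*2.+1)) x).
  rewrite doubleD -addnS alt_even pos_cat; apply: Wb_l.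
  by rewrite (rel_W _ _ Hst).
by rewrite addnn odd_double.
Qed.

Lemma three (s : S) b : [:: (s,b); (s,false); (s,~~b)] ~ [:: (s,false)].
Proof.
change ([:: (s,b)] ++ [:: (s,false)] ++ [:: (s,~~b)] ~ [:: (s,false)]).
rewrite !letter_W.
change ([:: (s,false); (s,false)] ++ [:: (s,false)] ~ [:: (s,false)]).
by rewrite ss_W.
Qed.

Lemma even_free a x : ~~ odd (cnt [:: a; letter_inv a] x).
Proof.
rewrite /cnt /= addn0.
have -> : Wb (cj [:: a] [:: ((letter_inv a).1, false)]) x = Wb [:: (a.1, false)] x.
  apply: Wb_l; case: a => s b /=; rewrite /cj /=; exact: three.
by rewrite addnn odd_double.
Qed.

Lemma cnt_inv u v : u ~ v -> forall x, odd (cnt u x) = odd (cnt v x).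
Proof.
elim=> {u v}.
- by [].
- by move=> u v _ H x; rewrite H.
- by move=> u v w _ H1 _ H2 x; rewrite H1 H2.
- move=> u v a x; apply: (cnt_insert u [:: a; letter_inv a] v) => //.
    exact: (pe_free _ [::] [::] a).
  exact: even_free.
- move=> u v r [s [t [Hst ->]]] x; apply: cnt_insert.
    by rewrite mul2n rel_W.
  exact: even_rel.
Qed.

Definition minimal (l : seq S) := forall l', pos l' ~ pos l -> size l <= size l'.

Lemma mem_refls l r : r \in refls (pos l) ->
  exists P y Q, l = P ++ y :: Q /\ r = cj (pos P) [:: (y,false)].
Proof.
elim: l r => [|y l IH] r //.
rewrite /= in_cons => /orP [/eqP -> | /mapP [r' Hr' ->]].
  by exists [::], y, l.
have [P [y' [Q [-> ->]]]] := IH r' Hr'.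
exists (y :: P), y', Q; split => //.
by rewrite /cj /= !winv_cons -!catA.
Qed.

Lemma conj_move (p r x q : word S) : p ++ r ++ winv p ~ x -> p ++ r ++ q ~ x ++ p ++ q.
Proof. by move=> <-; rewrite -!catA canc2. Qed.

Lemma noref x l : minimal (x :: l) -> forall r, r \in refls (pos l) -> ~ r ~ [:: (x,false)].
Proof.
move=> Hmin r /mem_refls [P [y [Q [El Er]]]] H.
have E : pos (P ++ Q) ~ pos (x :: l).
  rewrite El /= !pos_cat /=.
  rewrite Er /cj in H.
  have H2 := conj_move _ _ _ (pos Q) H.
  change (pos P ++ pos Q ~ [:: (x,false)] ++ pos P ++ [:: (y,false)] ++ pos Q).
  rewrite H2 catA; change (pos P ++ pos Q ~ [:: (x,false); (x,false)] ++ pos P ++ pos Q); by rewrite ss_W.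
have := Hmin _ E; rewrite El /= !size_cat /= => H3; by rewrite addnS ltnNge leqnSn in H3.
Qed.

Lemma cnt_one x l : minimal (x :: l) -> cnt (pos (x :: l)) [:: (x,false)] = 1.
Proof.
move=> Hmin; rewrite /cnt.
change (Wb [:: (x,false)] [:: (x,false)] +
  count (fun r => Wb r [:: (x,false)]) (map (cj [:: (x,false)]) (refls (pos l))) = 1).
have -> : Wb [:: (x,false)] [:: (x,false)] by apply/WbP.
rewrite count_cj.
have -> : count (fun r => Wb r (winv [:: (x,false)] ++ [:: (x,false)] ++ [:: (x,false)])) (refls (pos l))
  = count (fun r => Wb r [:: (x,false)]) (refls (pos l)).
  by apply: eq_count => r; apply: Wb_r; rewrite canc2.
suff -> : count (fun r => Wb r [:: (x,false)]) (refls (pos l)) = 0 by [].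
apply/eqP; rewrite eqn0Ngt -has_count; apply/hasPn => r Hr.
by apply/WbP; apply: noref Hr.
Qed.

Lemma exists_ref x l l' : minimal (x :: l) -> pos (x :: l) ~ pos l' ->
  exists P y Q, l' = P ++ y :: Q /\ cj (pos P) [:: (y,false)] ~ [:: (x,false)].
Proof.
move=> Hmin E.
have := cnt_inv _ _ E [:: (x,false)]; rewrite cnt_one // => Hodd.
have : 0 < cnt (pos l') [:: (x,false)].
  by move: Hodd; case: (cnt _ _).
rewrite /cnt -has_count => /hasP [r Hr /WbP Hrx].
have [P [y [Q [El Er]]]] := mem_refls _ _ Hr.
by exists P, y, Q; rewrite -Er.
Qed.

Lemma minimal_tail x l : minimal (x :: l) -> minimal l.
Proof.
move=> H l' E; have : pos (x :: l') ~ pos (x :: l) by rewrite /= E.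
by move/H.
Qed.

End Cox.

Lemma comm_inv X (R : word X -> Prop) (u v : word X) :
  pres_eq R (u ++ v) (v ++ u) -> pres_eq R (u ++ winv v) (winv v ++ u).
Proof.
move=> H.
apply: pe_trans (_ : pres_eq R _ (winv v ++ (v ++ u) ++ winv v)) _.
  by rewrite -catA canc2.
by rewrite -H -catA cat_winv cats0.
Qed.

Section Ad.
Variables (S : finType) (m : S -> S -> nat).
Hypothesis Hm : coxeter_matrix m.
Local Notation "u ~ v" := (pres_eq (cox_rel m) u v) (at level 70).
Local Notation "u ≡ v" := (pres_eq (ad_rel m) u v) (at level 70).

Lemma conjQ_proof (x : QW m) v : inQ m (winv v ++ proj1_sig x ++ v).
Proof.
case: x => w [u [s H]] /=; exists (u ++ v), s; rewrite /W_eq in H *.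
by rewrite H winv_cat -!catA.
Qed.

Definition conjQ (x : QW m) v : QW m :=
  exist _ (winv v ++ proj1_sig x ++ v) (conjQ_proof x v).

Lemma Ad_letter (x x' : QW m) : proj1_sig x ~ proj1_sig x' -> [:: (x,false)] ≡ [:: (x',false)].
Proof.
move=> H.
have H1 : [:: (x,false); (x',true)] ≡ [::].
  have := pe_rel (ad_rel m) [::] [::] [:: (x,false); (x',true)]; rewrite /=; apply.
  by left; exists x, x'.
apply: pe_trans (_ : _ ≡ [:: (x,false); (x',true)] ++ [:: (x',false)]) _.
  symmetry; exact: (pe_free _ [:: (x,false)] [::] (x',true)).
by rewrite H1.
Qed.

Definition phil (g : QW m * bool) : word S :=
  if g.2 then winv (proj1_sig g.1) else proj1_sig g.1.

Lemma phi_cons g a : phi m (g :: a) = phil g ++ phi m a.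
Proof. by []. Qed.

Lemma phi_nil : phi m [::] = [::].
Proof. by []. Qed.

Lemma phi_cat a b : phi m (a ++ b) = phi m a ++ phi m b.
Proof. by rewrite /phi map_cat flatten_cat. Qed.

Lemma phil_inv g : phil (letter_inv g) = winv (phil g).
Proof. by case: g => y [] //=; rewrite /phil /= winvK. Qed.

Lemma phi_winv a : phi m (winv a) = winv (phi m a).
Proof.
elim: a => [|g a IH] //.
by rewrite winv_cons phi_cat IH phi_cons winv_cat /= phil_inv cats0.
Qed.

Lemma phi_rel r : ad_rel m r -> phi m r ~ [::].
Proof.
case=> [[x [x' [H ->]]] | [x [y [z [H ->]]]]].
  rewrite /W_eq in H; rewrite !phi_cons phi_nil /phil /= cats0 H; exact: cat_winv.
rewrite /W_eq in H; rewrite !phi_cons phi_nil /phil /= cats0.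
rewrite (refl_inv _ _ Hm y) H !winv_cat !(refl_inv _ _ Hm) -!catA.
rewrite [proj1_sig y ++ (proj1_sig y ++ _)]catA (refl_sq _ _ Hm y) /=.
rewrite [proj1_sig x ++ (proj1_sig x ++ _)]catA (refl_sq _ _ Hm x) /=.
by rewrite (refl_sq _ _ Hm y).
Qed.

Lemma phi_proper a b : a ≡ b -> phi m a ~ phi m b.
Proof.
elim=> {a b}.
- by [].
- by move=> u v _ H; symmetry.
- by move=> u v w _ H1 _ H2; rewrite H1.
- move=> u v g; rewrite phi_cat !phi_cons phil_inv phi_cat canc1 //.
- move=> u v r Hr; rewrite !phi_cat (phi_rel _ Hr) //.
Qed.

Lemma conj_pos (y x : QW m) :
  [:: (y,true); (x,false); (y,false)] ≡ [:: (conjQ x (proj1_sig y), false)].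
Proof.
set z := conjQ x (proj1_sig y).
have Hz : proj1_sig z ~ proj1_sig y ++ proj1_sig x ++ proj1_sig y.
  by rewrite /z /= (refl_inv _ _ Hm y).
have Hr : [:: (y,true); (x,false); (y,false); (z,true)] ≡ [::].
  have := pe_rel (ad_rel m) [::] [::] [:: (y,true); (x,false); (y,false); (z,true)].
  rewrite /=; apply; right; by exists x, y, z.
apply: pe_trans (_ : _ ≡ [:: (y,true); (x,false); (y,false); (z,true)] ++ [:: (z,false)]) _.
  symmetry; exact: (pe_free _ [:: (y,true); (x,false); (y,false)] [::] (z,true)).
by rewrite Hr.
Qed.

Lemma conj_neg (y x : QW m) :
  [:: (y,false); (x,false); (y,true)] ≡ [:: (conjQ x (winv (proj1_sig y)), false)].
Proof.
set z := conjQ x (winv (proj1_sig y)).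
have H : [:: (y,true); (z,false); (y,false)] ≡ [:: (x,false)].
  rewrite conj_pos; apply: Ad_letter => /=.
  by rewrite winvK -!catA canc2 winv_cat' cats0.
change ([:: (y,false)] ++ [:: (x,false)] ++ [:: (y,true)] ≡ [:: (z,false)]).
rewrite -H.
apply: pe_trans (_ : _ ≡ [::] ++ [:: (z,false)] ++ [::]) _; last by [].
have := pe_free (ad_rel m) [::] [:: (z,false); (y,false); (y,true)] (y,false).
move=> H1; rewrite /= in H1; rewrite /= H1.
exact: (pe_free _ [:: (z,false)] [::] (y,false)).
Qed.

Lemma conj_letter g (x : QW m) :
  [:: letter_inv g; (x,false); g] ≡ [:: (conjQ x (phil g), false)].
Proof. case: g => y [] /=; [exact: conj_neg | exact: conj_pos]. Qed.

Lemma conj_gen a : forall (x : QW m),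
  winv a ++ [:: (x,false)] ++ a ≡ [:: (conjQ x (phi m a), false)].
Proof.
elim: a => [|g a IH] x.
  by apply: Ad_letter => /=; rewrite cats0.
rewrite winv_cons -catA.
change (winv a ++ [:: letter_inv g; (x,false); g] ++ a ≡ [:: (conjQ x (phi m (g :: a)), false)]).
rewrite conj_letter IH; apply: Ad_letter.
by rewrite /= phi_cons winv_cat -!catA.
Qed.

Lemma central c : phi m c ~ [::] -> forall a, c ++ a ≡ a ++ c.
Proof.
move=> Hc.
have Hpos : forall x : QW m, c ++ [:: (x,false)] ≡ [:: (x,false)] ++ c.
  move=> x.
  have E : winv c ++ [:: (x,false)] ++ c ≡ [:: (x,false)].
    rewrite conj_gen; apply: Ad_letter => /=.
    by rewrite Hc cats0.
  apply: pe_trans (_ : _ ≡ c ++ winv c ++ [:: (x,false)] ++ c) _.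
    by rewrite E.
  by rewrite canc1.
have Hlet : forall g, c ++ [:: g] ≡ [:: g] ++ c.
  case=> x [].
  - exact: (comm_inv _ _ _ _ (Hpos x)).
  - exact: Hpos.
elim=> [|g a IH]; first by rewrite cats0.
change (c ++ [:: g] ++ a ≡ [:: g] ++ a ++ c).
by rewrite catA Hlet -catA IH.
Qed.

End Ad.

Lemma conj_move' X (R : word X -> Prop) (p r x : word X) :
  pres_eq R (p ++ r ++ winv p) x -> pres_eq R (p ++ r) (x ++ p).
Proof. by move=> <-; rewrite -!catA winv_cat' cats0. Qed.

Arguments cj {S}.
Arguments minimal {S}.
Arguments exists_ref {S m} Hm {x l l'}.
Arguments minimal_tail {S m x l}.
Arguments conj_move {S m p r x q}.
Arguments cancl {X R p u v}.
Arguments conj_gen {S m} Hm a x.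
Arguments Ad_letter {S m x x'}.

Lemma pos_catG X (l1 l2 : seq X) : pos (l1 ++ l2) = pos l1 ++ pos l2.
Proof. by rewrite /pos map_cat. Qed.

Section Main.
Variables (S : finType) (m : S -> S -> nat).
Hypothesis Hm : coxeter_matrix m.
Local Notation "u ~ v" := (pres_eq (cox_rel m) u v) (at level 70).
Local Notation "u ≡ v" := (pres_eq (ad_rel m) u v) (at level 70).
Local Notation gen := (gen_of m).
Local Notation eP l := (pos (map (gen_of m) l)).

Lemma phi_posgen l : phi m (eP l) = pos l.
Proof. by elim: l => [|s l IH] //=; rewrite phi_cons IH. Qed.

Lemma match_lemma (P : seq S) (y x : S) :
  cj (pos P) [:: (y,false)] ~ [:: (x,false)] ->
  eP P ++ [:: (gen y, false)] ≡ [:: (gen x, false)] ++ eP P.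
Proof.
move=> H; apply: conj_move'.
have := conj_gen Hm (winv (eP P)) (gen y); rewrite winvK => ->.
apply: Ad_letter => /=.
by rewrite phi_winv winvK phi_posgen.
Qed.

Lemma WD n : forall l l', size l = n -> minimal m l -> minimal m l' ->
  pos l ~ pos l' -> eP l ≡ eP l'.
Proof.
elim: n => [|n IH] l l' Hs Hl Hl' E.
  move/size0nil: Hs => Hs; subst l.
  have : size l' <= 0 by exact: (Hl' [::] E).
  by rewrite leqn0 => /nilP ->.
case: l Hs Hl E => [//|x l1] [Hs] Hl E.
have [P [y [Q [El' Hc]]]] := exists_ref Hm Hl E.
have E2 : pos l' ~ [:: (x,false)] ++ pos (P ++ Q).
  rewrite El' !pos_cat /=.
  change (pos P ++ [:: (y,false)] ++ pos Q ~ [:: (x,false)] ++ pos P ++ pos Q).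
  exact: conj_move.
have E3 : pos l1 ~ pos (P ++ Q).
  apply: (@cancl _ _ [:: (x,false)]); by rewrite -E2 -E.
have HPQ : minimal m (P ++ Q).
  move=> l'' H''.
  have : size l' <= size (x :: l'').
    apply: Hl'; rewrite E2 -H'' //.
  by rewrite El' !size_cat /= addnS ltnS.
have IH' := IH l1 (P ++ Q) Hs (minimal_tail Hl) HPQ E3.
rewrite El' map_cat pos_catG.
change ([:: (gen x, false)] ++ eP l1 ≡ eP P ++ [:: (gen y, false)] ++ eP Q).
rewrite IH' map_cat pos_catG.
rewrite catA -(match_lemma _ _ _ Hc) -catA //.
Qed.

End Main.

Arguments strip {S m} Hm w.
Arguments central {S m} Hm c.
Arguments phi_proper {S m} Hm {a b}.
Arguments WD {S m} Hm n l l'.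

Section Final.
Variables (S : finType) (m : S -> S -> nat).
Hypothesis Hm : coxeter_matrix m.
Local Notation "u ~ v" := (pres_eq (cox_rel m) u v) (at level 70).
Local Notation "u ≡ v" := (pres_eq (ad_rel m) u v) (at level 70).

Lemma exists_red w : exists l, reduced_expr m w l.
Proof.
suff H : forall n l, size l <= n -> pos l ~ w -> exists l, reduced_expr m w l.
  apply: (H _ (map fst w) (leqnn _)); exact: strip Hm w.
elim=> [|n IH] l Hs Hw.
  exists l; split => // l' _; by move: Hs; rewrite leqn0 => /eqP ->.
case: (classic (forall l', W_eq m (pos l') w -> size l <= size l')) => Hc.
  by exists l; split.
have [l' Hl'] := not_all_ex_not _ _ Hc.
case: (imply_to_and _ _ Hl') => H1 H2.
apply: (IH l') => //.
by rewrite -ltnS (leq_trans _ Hs) // ltnNge; apply/negP.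
Qed.

Lemma red_spec w : reduced_expr m w (red_of m w).
Proof. rewrite /red_of; apply: epsilon_spec; exact: exists_red. Qed.

Lemma red_min w : minimal m (red_of m w).
Proof.
have [H1 H2] := red_spec w; move=> l' H; apply: H2.
rewrite /W_eq in H1 *; by rewrite H.
Qed.

Lemma Fmap_proper w w' : w ~ w' -> Fmap m w ≡ Fmap m w'.
Proof.
move=> E; rewrite /Fmap.
apply: (WD Hm _ _ _ erefl (red_min w) (red_min w')).
have [H1 _] := red_spec w; have [H1' _] := red_spec w'.
rewrite /W_eq in H1 H1'; by rewrite H1 H1' E.
Qed.

Lemma phi_Fmap w : phi m (Fmap m w) ~ w.
Proof. rewrite /Fmap phi_posgen; by case: (red_spec w). Qed.

Lemma red_nil : red_of m [::] = [::].
Proof.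
have [_ H] := red_spec [::].
have : size (red_of m [::]) <= 0 by apply: (H [::]).
by rewrite leqn0 => /nilP.
Qed.

Lemma Fmap_nil : Fmap m [::] = [::].
Proof. by rewrite /Fmap red_nil. Qed.

Lemma cmove c p q : phi m c ~ [::] -> p ++ c ++ q ≡ c ++ p ++ q.
Proof. by move=> H; rewrite catA -(central Hm c H p) -catA. Qed.

Lemma phi_ccoc w1 w2 : phi m (ccoc m w1 w2) ~ [::].
Proof.
rewrite /ccoc !phi_cat phi_winv !phi_Fmap.
rewrite catA cat_winv //.
Qed.

End Final.

Arguments Fmap_proper {S m} Hm w w'.
Arguments phi_ccoc {S m} Hm w1 w2.
Arguments cmove {S m} Hm c p q.
Arguments phi_Fmap {S m} Hm w.

Theorem proposition4p3 (S : finType) (m : S -> S -> nat) :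
  coxeter_matrix m ->
  normalized_2cocycle m (ccoc m) /\
  (forall sigma : word S -> word (QW m), is_section m sigma ->
     cohomologous m (ccoc m) (ext_cocycle m sigma)).
Proof.
move=> Hm.
have Fp := Fmap_proper Hm.
have Pc := phi_ccoc Hm.
split.
  split.
    move=> w1 w1' w2 w2' H1 H2; rewrite /W_eq /Ad_eq in H1 H2 *.
    have H12 : pres_eq (cox_rel m) (w1 ++ w2) (w1' ++ w2') by rewrite H1 H2.
    by rewrite /ccoc (Fp _ _ H1) (Fp _ _ H2) (Fp _ _ H12).
  split; first by move=> w1 w2; exact: Pc.
  split.
    move=> w; rewrite /Ad_eq /ccoc (Fmap_nil _ _ Hm) cats0 /=.
    split; exact: cat_winv.
  move=> g h k; rewrite /Ad_eq.
  set N := Fmap m g ++ Fmap m h ++ Fmap m k ++ winv (Fmap m (g ++ h ++ k)).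
  transitivity N.
    rewrite {2}/ccoc -(cmove Hm (ccoc m h k) (Fmap m g) _ (Pc h k)).
    by rewrite /ccoc -!catA canc2.
  symmetry; rewrite -(central Hm _ (Pc g h) (ccoc m (g ++ h) k)).
  by rewrite /ccoc -!catA canc2.
move=> sigma [Hs1 Hs2].
pose b w := Fmap m w ++ winv (sigma w).
have Pb : forall w, pres_eq (cox_rel m) (phi m (b w)) [::].
  move=> w; rewrite /b phi_cat phi_winv (phi_Fmap Hm).
  have := Hs2 w; rewrite /W_eq => ->; exact: cat_winv.
exists b; split.
  move=> w w' H; rewrite /b /Ad_eq (Fp _ _ H).
  by have := Hs1 _ _ H; rewrite /Ad_eq => ->.
split; first exact: Pb.
move=> w1 w2; rewrite /Ad_eq /ext_cocycle.
have PE : pres_eq (cox_rel m) (phi m (sigma w1 ++ sigma w2 ++ winv (sigma (w1 ++ w2)))) [::].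
  rewrite !phi_cat phi_winv.
  have := Hs2 w1; have := Hs2 w2; have := Hs2 (w1 ++ w2); rewrite /W_eq => -> -> ->.
  by rewrite catA cat_winv.
set E := sigma w1 ++ sigma w2 ++ winv (sigma (w1 ++ w2)).
rewrite /b winv_cat winvK.
set b2 := Fmap m w2 ++ winv (sigma w2).
have Pb2 : pres_eq (cox_rel m) (phi m b2) [::] by exact: Pb.
rewrite -[E ++ _]cat0s (cmove Hm _ _ _ PE) /=.
rewrite -(cmove Hm E (Fmap m w1 ++ winv (sigma w1)) _ PE).
rewrite /E -!catA canc2.
rewrite [Fmap m w2 ++ _]catA.
rewrite (cmove Hm (Fmap m w2 ++ winv (sigma w2)) (winv (sigma (w1 ++ w2))) _ Pb2).
rewrite (cmove Hm (Fmap m w2 ++ winv (sigma w2)) (sigma w2) _ Pb2).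
rewrite /b2 /ccoc -!catA canc2 canc2 //.
Qed.
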